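(* Let $s\ge0$, $n=2s+1$, and let $\mathcal{G}_{2s+1}\subset GL_{2s+1}(\mathbb{Z})$ be the group generated by the linear maps $\sigma_1,\dotsc,\sigma_{2s+1}$ of $\mathbb{Z}^{2s+1}$ given in coordinates $k=(k_1,\dotsc,k_{2s+1})$ by \[ \sigma_1:\ k_1\mapsto k_1,\quad k_j\mapsto k_j+k_1\ (j>1); \] \[ \sigma_i\ (2\le i\le 2s+1):\ k_{i-1}\mapsto 2k_{i-1}-k_i,\quad k_i\mapsto k_{i-1},\quad k_j\mapsto k_j\ (j\ne i-1,i). \] For nonzero $k\in\mathbb{Z}^{2s+1}$ put $\gamma=\gcd(k_1,\dotsc,k_{2s+1})$, $\alpha=\#\{i:\ k_i/\gamma\equiv1\pmod2\}$, $\delta=|2\alpha-2s-2|$ and $x_{2s+1}=k_1-k_2+k_3-\dotsb+k_{2s+1}$. Then the triple $(\gamma,\delta,x_{2s+1})$ is invariant under $\mathcal{G}_{2s+1}$: for every $g\in\mathcal{G}_{2s+1}$ and every nonzero $k$, the vectors $k$ and $gk$ have the same values of $\gamma$, $\delta$ and $x_{2s+1}$. *)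

(* Defs.v *)
From mathcomp Require Import all_boot all_order all_algebra.
Set Implicit Arguments. Unset Strict Implicit. Unset Printing Implicit Defensive.
Import Order.TTheory GRing.Theory Num.Theory.
Local Open Scope ring_scope.

(* Coordinates are 0-based: paper's k_{j} is k (j-1) 0.
   Paper's sigma_1 is sigma 0; paper's sigma_i (2<=i<=n) is sigma (i-1). *)
Definition sigma (n : nat) (i : 'I_n) : 'M[int]_n :=
  \matrix_(a < n, b < n)
    if (i == 0 :> nat) then
      ((a == b) + ((a != 0 :> nat) && (b == 0 :> nat)))%:Z
    else if (a == i.-1 :> nat) then
      (if (b == i.-1 :> nat) then 2 else if (b == i :> nat) then -1 else 0)
    else if (a == i :> nat) then ((b == i.-1 :> nat) : nat)%:Z
    else ((a == b) : nat)%:Z.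

Inductive inG (n : nat) : 'M[int]_n -> Prop :=
  | inG_gen i : inG (sigma i)
  | inG_mul A B : inG A -> inG B -> inG (A *m B)
  | inG_inv A : inG A -> inG (invmx A).

Definition gammaK (n : nat) (k : 'cV[int]_n) : nat :=
  \big[gcdn/0%N]_(j < n) `|k j ord0|%N.

Definition alphaK (n : nat) (k : 'cV[int]_n) : nat :=
  #|[set j : 'I_n | ((k j ord0 %/ (gammaK k)%:Z)%Z %% 2)%Z == 1]|.

Definition deltaK (s : nat) (k : 'cV[int]_((2 * s).+1)) : int :=
  `|(2 * alphaK k)%:Z - (2 * s + 2)%:Z|.

Definition xK (n : nat) (k : 'cV[int]_n) : int :=
  \sum_(j < n) (-1) ^+ j * k j ord0.

(* Main.v *)
Require Import Defs.
From mathcomp Require Import all_boot all_order all_algebra all_fingroup zify ring.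
Import Order.TTheory GRing.Theory Num.Theory.
Local Open Scope ring_scope.

Lemma sum_pick n (F : 'I_n -> int) c :
  (forall b, b != c -> F b = 0) -> \sum_b F b = F c.
Proof. by move=> H; rewrite (bigD1 c) //= big1 ?addr0 // => b /H. Qed.

Lemma sum_pick2 n (F : 'I_n -> int) c d : c != d ->
  (forall b, b != c -> b != d -> F b = 0) -> \sum_b F b = F c + F d.
Proof.
move=> cd H; rewrite (bigD1 c) //= (bigD1 d) 1?eq_sym //= big1 ?addr0 //.
by move=> b /andP[bc bd]; apply: H.
Qed.

Lemma sig0E n (i : 'I_n) (k : 'cV[int]_n) a : (i == 0 :> nat) ->
  (sigma i *m k) a ord0 = k a ord0 + ((a != 0 :> nat) : nat)%:Z * k i ord0.
Proof.
move=> hi; rewrite !mxE.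
under eq_bigr => b _ do rewrite mxE hi PoszD mulrDl.
rewrite big_split /=; congr (_ + _).
  rewrite (@sum_pick _ _ a) ?eqxx ?mul1r // => b ba.
  by rewrite eq_sym (negbTE ba) mul0r.
rewrite (@sum_pick _ _ i) ?(eqP hi) ?eqxx ?andbT //= => b bi.
case: (b =P 0%N :> nat) => [b0|]; last by rewrite andbF mul0r.
by case/eqP: bi; apply: val_inj; rewrite /= b0 (eqP hi).
Qed.

Lemma sigSE n (i j : 'I_n) (k : 'cV[int]_n) a : j.+1 = i :> nat ->
  (sigma i *m k) a ord0 = if a == j then 2 * k j ord0 - k i ord0
     else if a == i then k j ord0 else k a ord0.
Proof.
move=> hj; rewrite !mxE.
have ij : i != j by apply/eqP => e; move: hj; rewrite e; lia.
have hp : (i : nat).-1 = j by rewrite -hj.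
have i0 : (i == 0 :> nat) = false by apply/eqP; lia.
under eq_bigr => b _ do rewrite mxE i0 hp.
case: (a =P j) => [->|aj].
  rewrite eqxx (@sum_pick2 _ _ _ _ ij) ?eqxx /=.
    rewrite ifN; last by apply/eqP => e; case/eqP: ij; apply: val_inj.
    by rewrite mulN1r addrC.
  move=> b bi bj; rewrite ifN; last exact: bj.
  by rewrite ifN ?mul0r; last exact: bi.
rewrite (_ : (a == j :> nat) = false); last by apply/negP => /eqP e; apply: aj; apply: val_inj.
case: (a =P i) => [->|ai].
  rewrite eqxx (@sum_pick _ _ j) ?eqxx ?mul1r // => b bj.
  by rewrite (_ : (b == j :> nat) = false) ?mul0r //; apply: negbTE.
rewrite (_ : (a == i :> nat) = false); last by apply/negP => /eqP e; apply: ai; apply: val_inj.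
rewrite (@sum_pick _ _ a) ?eqxx ?mul1r // => b ba.
by rewrite eq_sym (negbTE ba) mul0r.
Qed.

Lemma gammaP n (k : 'cV[int]_n) (d : nat) :
  (d %| gammaK k)%N <-> forall j, (d%:Z %| k j ord0)%Z.
Proof.
split; first by move/dvdn_biggcdP => H j; rewrite dvdzE; exact: H.
by move=> H; apply/dvdn_biggcdP => j _; move: (H j); rewrite dvdzE.
Qed.

Lemma gamma_eq n (k k' : 'cV[int]_n) :
  (forall d : nat, (forall j, (d%:Z %| k j ord0)%Z) <-> (forall j, (d%:Z %| k' j ord0)%Z)) ->
  gammaK k' = gammaK k.
Proof.
move=> H; apply/eqP; rewrite eqn_dvd; apply/andP; split; apply/gammaP.
  by apply/H; apply/gammaP.
by apply/H; apply/gammaP.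
Qed.

Lemma gamma0 n (i : 'I_n) (k : 'cV[int]_n) : (i == 0 :> nat) ->
  gammaK (sigma i *m k) = gammaK k.
Proof.
move=> hi; apply: gamma_eq => d; split => H j.
  by rewrite sig0E // rpredD ?dvdz_mull.
have -> : k j 0 = (sigma i *m k) j 0 - ((j != 0 :> nat) : nat)%:Z * (sigma i *m k) i 0.
  by rewrite !sig0E // (eqP hi) /= mul0r addr0 addrK.
by rewrite rpredB ?dvdz_mull.
Qed.

Lemma gammaS n (i j : 'I_n) (k : 'cV[int]_n) : j.+1 = i :> nat ->
  gammaK (sigma i *m k) = gammaK k.
Proof.
move=> hj; have ij : i != j by apply/eqP => e; move: hj; rewrite e; lia.
apply: gamma_eq => d; split => H a.
  rewrite (sigSE _ _ _ _ _ hj); case: ifP => _; first by rewrite rpredB ?dvdz_mull.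
  by case: ifP => _; apply: H.
move: (H i) (H j); rewrite !(sigSE _ _ _ _ _ hj) !eqxx (negbTE ij) => Hi Hj.
case: (a =P j) => [->|aj]; first exact: Hi.
case: (a =P i) => [->|ai].
  have -> : k i ord0 = 2 * k j ord0 - (2 * k j ord0 - k i ord0) by ring.
  by rewrite rpredB ?dvdz_mull.
by move: (H a); rewrite (sigSE _ _ _ _ _ hj) ifN ?ifN //; apply/eqP.
Qed.

Lemma alphaE n (k : 'cV[int]_n) : alphaK k =
  (\sum_j (((k j ord0 %/ (gammaK k)%:Z)%Z %% 2)%Z == 1 : nat))%N.
Proof.
rewrite /alphaK -sum1_card big_mkcond /=.
by apply: eq_bigr => j _; rewrite inE; case: (_ == _).
Qed.

Lemma gamma_div n (k : 'cV[int]_n) j :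
  (k j ord0 %/ (gammaK k)%:Z)%Z * (gammaK k)%:Z = k j ord0.
Proof. by apply: divzK; move: j; apply/gammaP. Qed.

Lemma alpha0 s (i : 'I_(2 * s).+1) (k : 'cV[int]_(2 * s).+1) : (i == 0 :> nat) ->
  alphaK (sigma i *m k) = alphaK k \/ (alphaK (sigma i *m k) + alphaK k = 2 * s + 2)%N.
Proof.
move=> hi; rewrite !alphaE gamma0 //.
have iE : i = ord0 by apply: val_inj; rewrite /= (eqP hi).
case: (gammaK k =P 0)%N => [g0|gn0].
  have e : (gammaK k)%:Z = 0 by rewrite g0.
  by left; apply: eq_bigr => j _; rewrite e !intdiv.divz0.
set g := gammaK k.
have gz : g%:Z != 0 by apply/eqP => e; apply: gn0; lia.
set b := fun j => (k j ord0 %/ g%:Z)%Z.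
have hb : forall a, ((sigma i *m k) a ord0 %/ g%:Z)%Z = b a + ((a != 0 :> nat) : nat)%:Z * b i.
  move=> a; rewrite sig0E // -(gamma_div _ k a) -(gamma_div _ k i) -/g.
  have -> : b a * g%:Z + ((a != 0 :> nat) : nat)%:Z * (b i * g%:Z) =
     (b a + ((a != 0 :> nat) : nat)%:Z * b i) * g%:Z by ring.
  by rewrite mulzK.
under eq_bigr do rewrite hb.
rewrite -/b.
case: (boolP ((b i %% 2)%Z == 1)) => hbi.
  right; rewrite !big_ord_recl /= iE mul0r addr0.
  rewrite iE in hbi; rewrite hbi.
  under eq_bigr do rewrite mul1r.
  have hpar : forall x, (((b x + b ord0) %% 2)%Z == 1) = ~~ ((b x %% 2)%Z == 1).
    move=> x; move: hbi; case: eqP; case: eqP => //; lia.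
  under eq_bigr => x _ do rewrite hpar.
  rewrite /b.
  have H2 : (\sum_(x < 2*s) (~~ (((k (lift ord0 x) ord0 %/ g%:Z)%Z %% 2)%Z == 1) : nat)
     + \sum_(x < 2*s) ((((k (lift ord0 x) ord0 %/ g%:Z)%Z %% 2)%Z == 1) : nat) = 2 * s)%N.
    by rewrite -big_split /=; under eq_bigr do rewrite addn_negb; rewrite sum1_card card_ord.
  rewrite -[X in (_ = X + 2)%N]H2 /=.
  by rewrite addnACA addnC.
left; apply: eq_bigr => a _; case: (a != 0 :> nat) => /=; rewrite ?mul0r ?mul1r ?addr0 //.
move: hbi; rewrite /b => /eqP hbi; apply/eqP/eqP; lia.
Qed.

Lemma alphaS n (i j : 'I_n) (k : 'cV[int]_n) : j.+1 = i :> nat ->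
  alphaK (sigma i *m k) = alphaK k.
Proof.
move=> hj; have ij : i != j by apply/eqP => e; move: hj; rewrite e; lia.
rewrite !alphaE (gammaS _ _ _ _ hj).
case: (gammaK k =P 0)%N => [g0|gn0].
  have e : (gammaK k)%:Z = 0 by rewrite g0.
  by apply: eq_bigr => a _; rewrite e !intdiv.divz0.
set g := gammaK k.
have gz : g%:Z != 0 by apply/eqP => e; apply: gn0; lia.
set b := fun j => (k j ord0 %/ g%:Z)%Z.
have hb : forall a, ((sigma i *m k) a ord0 %/ g%:Z)%Z =
    if a == j then 2 * b j - b i else if a == i then b j else b a.
  move=> a; rewrite (sigSE _ _ _ _ _ hj); case: ifP => _; last by case: ifP.
  rewrite -(gamma_div _ k j) -(gamma_div _ k i) -/g.
  have -> : 2 * (b j * g%:Z) - b i * g%:Z = (2 * b j - b i) * g%:Z by ring.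
  by rewrite mulzK.
under eq_bigr do rewrite hb.
rewrite [RHS](reindex_inj (@perm_inj _ (tperm j i))) /=.
apply: eq_bigr => a _.
case: (a =P j) => [->|aj].
  rewrite tpermL; apply/eqP/eqP; rewrite /b; lia.
case: (a =P i) => [->|ai]; first by rewrite tpermR.
by rewrite tpermD //; apply/eqP => e; [apply: aj | apply: ai].
Qed.

Lemma alt0 s : \sum_(a < 2 * s) (-1) ^+ a.+1 = 0 :> int.
Proof.
elim: s => [|s IH]; first by rewrite big_ord0.
rewrite (_ : (2 * s.+1 = (2 * s).+2)%N); last by lia.
rewrite !big_ord_recr /= IH !exprS; ring.
Qed.

Lemma x0 s (i : 'I_(2 * s).+1) (k : 'cV[int]_(2 * s).+1) : (i == 0 :> nat) ->
  xK (sigma i *m k) = xK k.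
Proof.
move=> hi; have iE : i = ord0 by apply: val_inj; rewrite /= (eqP hi).
rewrite /xK !big_ord_recl.
under eq_bigr do rewrite sig0E // mulrDr.
rewrite sig0E // big_split /= iE mul0r addr0; congr (_ + _).
rewrite -[RHS]addr0; congr (_ + _).
rewrite -mulr_suml (_ : \sum_(i0 < 2 * s) _ = 0) ?mul0r //.
by rewrite -[RHS](alt0 s); apply: eq_bigr => a _; rewrite /bump leq0n add1n.
Qed.

Lemma xS n (i j : 'I_n) (k : 'cV[int]_n) : j.+1 = i :> nat ->
  xK (sigma i *m k) = xK k.
Proof.
move=> hj; have ij : i != j by apply/eqP => e; move: hj; rewrite e; lia.
rewrite /xK; apply/eqP; rewrite -subr_eq0 -sumrB.
rewrite (@sum_pick2 _ _ j i); last 2 first.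
- by rewrite eq_sym.
- move=> b bj bi; rewrite (sigSE _ _ _ _ _ hj) (negbTE bj) (negbTE bi); exact: subrr.
rewrite !(sigSE _ _ _ _ _ hj) !eqxx (negbTE ij).
rewrite -hj exprS; apply/eqP; ring.
Qed.

Definition Pinv s (g : 'M[int]_((2 * s).+1)) := forall k : 'cV[int]_(2 * s).+1,
  [/\ gammaK (g *m k) = gammaK k, deltaK (g *m k) = deltaK k & xK (g *m k) = xK k].

Lemma gen_inv s (i : 'I_(2 * s).+1) : Pinv s (sigma i).
Proof.
move=> k; have [hi|hi] := boolP (i == 0 :> nat).
  split; [exact: gamma0 | | exact: (x0 _ _ _ hi)].
  rewrite /deltaK; case: (alpha0 _ _ k hi) => [->//|h]; lia.
have hj' : (i.-1 < (2 * s).+1)%N by have := ltn_ord i; lia.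
have hj : (Ordinal hj').+1 = i :> nat by rewrite /=; lia.
split; [exact: (gammaS _ _ _ _ hj) | | exact: (xS _ _ _ _ hj)].
by rewrite /deltaK (alphaS _ _ _ _ hj).
Qed.

Lemma inG_inv s (g : 'M[int]_((2 * s).+1)) : inG g -> Pinv s g.
Proof.
elim=> [i|A B _ IA _ IB|A _ IA] k.
- exact: gen_inv.
- rewrite -mulmxA; case: (IA (B *m k)) => -> -> ->; exact: IB.
- case: (boolP (A \in unitmx)) => hu.
    have := IA (invmx A *m k); rewrite mulKVmx // => -[h1 h2 h3]; by split.
  by rewrite invmx_out ?inE //; exact: IA.
Qed.

Theorem mainTheorem6 (s : nat) (g : 'M[int]_((2 * s).+1)) (k : 'cV[int]_((2 * s).+1)) :
  inG g -> k != 0 ->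
  [/\ gammaK (g *m k) = gammaK k,
      deltaK (g *m k) = deltaK k &
      xK (g *m k) = xK k].
Proof. by move=> hg _; exact: inG_inv. Qed.
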